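(* For every rooted tree $T$ (rooted at $s$) which is a subgraph of the network graph and in which every vertex knows its parent and children, there is a CONGEST algorithm with $\widetilde{O}(D(T))$ rounds and $\widetilde{O}(1)$ congestion at the end of which every vertex $v$ of $T$ knows its heavy/light classification in $T$ and its compressed path $\pi^*(s,v,T)$.
   Context: CONGEST model: synchronous rounds, each vertex has a unique $O(\log n)$-bit ID and may send an $O(\log n)$-bit message to each neighbour per round; $\widetilde{O}$ hides polylog$(n)$ factors; congestion is the maximum total number of messages sent over an edge. $D(T)$ is the diameter of $T$. For a non-leaf vertex $v$ of the rooted tree $T$, its heavy child is the child $v'$ maximizing the number of vertices of the subtree $T_{v'}$ (ties broken arbitrarily but consistently); other children are light children. A vertex is heavy if it is a heavy child and light otherwise (the root is light). For a vertex $v$, let $L=[s=v_0,v_1,\dots,v_k]$ be the ordered list of light vertices on the root-to-$v$ tree path $\pi(s,v,T)$; the compressed path $\pi^*(s,v,T)$ consists of $L$ together with a table mapping each $v_i$ to the number of heavy vertices strictly between $v_i$ and $v_{i+1}$ on $\pi(s,v,T)$, where $v_{k+1}:=v$. *)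

(* Defs.v *)
From mathcomp Require Import all_boot.
Set Implicit Arguments. Unset Strict Implicit. Unset Printing Implicit Defensive.

Section Tree.
Variable n : nat.
Variable adj : rel 'I_n.
Variable VT : {set 'I_n}.
Variable p : 'I_n -> 'I_n.
Variable s : 'I_n.

Definition is_rooted_tree : Prop :=
  [/\ s \in VT, p s = s &
      forall v, v \in VT -> v != s ->
        [/\ p v \in VT, adj v (p v) & exists k, iter k p v = s]].

Definition anc (v u : 'I_n) : bool := [exists k : 'I_n, iter k p u == v].
Definition subtree (v : 'I_n) : {set 'I_n} := [set u in VT | anc v u].
Definition children (v : 'I_n) : {set 'I_n} :=
  [set u in VT | (u != s) && (p u == v)].

Definition heavy_choice (hc : 'I_n -> 'I_n) : Prop :=
  forall v, v \in VT -> children v != set0 ->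
    hc v \in children v /\
    forall u, u \in children v -> #|subtree u| <= #|subtree (hc v)|.

Variable hc : 'I_n -> 'I_n.
Definition heavy (v : 'I_n) : bool := [&& v \in VT, v != s & hc (p v) == v].
Definition light (v : 'I_n) : bool := (v \in VT) && ~~ heavy v.

Definition depth (v : 'I_n) : nat := count (fun k => iter k p v != s) (iota 0 n).
Definition rpath (v : 'I_n) : seq 'I_n := rev (traject p v (depth v).+1).

(* compressed path pi*(s,v,T): list of (ID of v_i, number of heavy vertices
   strictly between v_i and v_{i+1} on the path), with v_{k+1} := v *)
Definition compressed (ID : 'I_n -> nat) (v : 'I_n) : seq (nat * nat) :=
  let P := rpath v in
  let L := [seq u <- P | light u] in
  [seq (ID (nth v L i),
        count heavy (take (index (nth v L i.+1) P - index (nth v L i) P).-1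
                          (drop (index (nth v L i) P).+1 P)))
  | i <- iota 0 (size L)].

Definition tadj (u w : 'I_n) : bool :=
  [&& u \in VT, w \in VT, u != w & (p u == w) || (p w == u)].
Definition ball (u : 'I_n) (k : nat) : {set 'I_n} :=
  iter k (fun S => S :|: [set w | [exists x in S, tadj x w]]) [set u].
Definition diam : nat :=
  find (fun k => [forall u in VT, forall w in VT, w \in ball u k]) (iota 0 n).
End Tree.

Record LocalInput := {
  li_n : nat; li_id : nat; li_nbrs : seq nat;
  li_inT : bool; li_parent : option nat; li_children : seq nat }.

(* output: (is v heavy?, compressed path pi*(s,v,T) with vertices as IDs);
   None means "not yet terminated" *)
Definition Output := (bool * seq (nat * nat))%type.

(* a deterministic synchronous message-passing algorithm with arbitrary
   local computation; messages are bit strings, addressed by neighbour ID *)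
Record Alg := {
  St : Type;
  a_init : LocalInput -> St;
  a_send : St -> nat -> option (seq bool);
  a_recv : St -> (nat -> option (seq bool)) -> St;
  a_out : St -> option Output }.

Definition local_input n (adj : rel 'I_n) (ID : 'I_n -> nat) (VT : {set 'I_n})
  (p : 'I_n -> 'I_n) (s : 'I_n) (v : 'I_n) : LocalInput :=
  {| li_n := n; li_id := ID v;
     li_nbrs := [seq ID u | u <- enum [set u | adj v u]];
     li_inT := v \in VT;
     li_parent := if (v \in VT) && (v != s) then Some (ID (p v)) else None;
     li_children := [seq ID u | u <- enum (children VT p s v)] |}.

Fixpoint exec (A : Alg) n (adj : rel 'I_n) (ID : 'I_n -> nat)
    (loc : 'I_n -> LocalInput) (r : nat) : 'I_n -> St A :=
  match r with
  | 0 => fun v => @a_init A (loc v)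
  | r'.+1 =>
      let st := exec A adj ID loc r' in
      fun v => @a_recv A (st v)
        (fun j => match [pick u | adj u v && (ID u == j)] with
                  | Some u => @a_send A (st u) (ID v)
                  | None => None
                  end)
  end.

Definition lg (n : nat) : nat := (trunc_log 2 n).+1.

(* Main.v *)
Require Import Defs.
From mathcomp Require Import all_boot.
From mathcomp Require Import zify.
Set Implicit Arguments. Unset Strict Implicit. Unset Printing Implicit Defensive.

Fixpoint enc (w x : nat) : seq bool :=
  if w is w'.+1 then odd x :: enc w' x./2 else [::].
Definition dec (m : seq bool) : nat := foldr (fun (b : bool) acc => b + acc.*2) 0 m.

Lemma size_enc w x : size (enc w x) = w.
Proof. by elim: w x => //= w IH x; rewrite IH. Qed.

Lemma dec_enc w x : x < 2 ^ w -> dec (enc w x) = x.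
Proof.
elim: w x => [|w IH] x /=; first by rewrite expn0 ltnS leqn0 => /eqP.
move=> hx; rewrite /dec /= -/(dec _) IH ?odd_double_half //.
by rewrite ltn_half_double -mul2n -expnS.
Qed.

Definition downmsg (W : nat) (hb lf : bool) (e : nat * nat) : seq bool :=
  hb :: lf :: enc W e.1 ++ enc W e.2.
Definition decpair (W : nat) (m : seq bool) : nat * nat :=
  (dec (take W (drop 2 m)), dec (drop W (drop 2 m))).
Definition lflag (m : seq bool) := nth false m 1.

Lemma decpair_down W hb lf e : e.1 < 2 ^ W -> e.2 < 2 ^ W ->
  decpair W (downmsg W hb lf e) = e.
Proof.
case: e => a b /= ha hb'; rewrite /decpair /downmsg /= drop0.
by rewrite take_size_cat ?size_enc // drop_size_cat ?size_enc // !dec_enc.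
Qed.

Lemma size_downmsg W hb lf e : size (downmsg W hb lf e) = (W + W).+2.
Proof. by rewrite /downmsg /= size_cat !size_enc. Qed.

Section Sel.
Variable T : Type.
Variable f : T -> nat.
Fixpoint selr (x : T) (l : seq T) : T :=
  if l is y :: l' then selr (if f x < f y then y else x) l' else x.
Definition sel (x0 : T) (l : seq T) : T := selr (head x0 l) l.

Lemma selr_ge x l : f x <= f (selr x l) /\ forall y, List.In y l -> f y <= f (selr x l).
Proof.
elim: l x => [|y l IH] x /=; first by split.
have [H1 H2] := IH (if f x < f y then y else x).
case: ifP H1 H2 => hxy H1 H2; split.
- exact: leq_trans (ltnW hxy) H1.
- by move=> z [<-|/H2].
- by [].
- move=> z [<-|/H2] //; move: hxy => /negbT; rewrite -leqNgt => hxy.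
  exact: leq_trans hxy H1.
Qed.

Lemma selr_in x l : selr x l = x \/ List.In (selr x l) l.
Proof.
elim: l x => [|y l IH] x /=; first by left.
case: (IH (if f x < f y then y else x)) => [->|H]; last by right; right.
by case: ifP => _; [right; left|left].
Qed.
End Sel.

Lemma selr_map (T U : Type) (g : T -> U) (f : T -> nat) (f' : U -> nat) x l :
  (forall a, List.In a (x :: l) -> f' (g a) = f a) ->
  selr f' (g x) (map g l) = g (selr f x l).
Proof.
elim: l x => [|y l IH] x //= H.
have -> : (if f' (g x) < f' (g y) then g y else g x) = g (if f x < f y then y else x).
  by rewrite !H /=; [case: ifP| right; left| left].
apply: IH => a /= [<-|Ha]; first by case: ifP => _; apply: H; [right; left|left].
by apply: H; right; right.
Qed.

Fixpoint bumplast (l : seq (nat * nat)) (b : bool) : seq (nat * nat) :=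
  match l with
  | [::] => [::]
  | [:: e] => [:: (e.1, e.2 + b)]
  | e :: l' => e :: bumplast l' b
  end.

Lemma bumplast_rcons l e b : bumplast (rcons l e) b = rcons l (e.1, e.2 + b).
Proof.
elim: l => [|x l IH] //=; case: l IH => [|y l] IH //=.
by move: IH => /= ->.
Qed.

Lemma size_bumplast l b : size (bumplast l b) = size l.
Proof. elim: l => [|x l IH] //=; case: l IH => [|y l] IH //=; by rewrite IH. Qed.

Lemma bumplast_bound l b B : (forall e, e \in l -> e.2 < B) ->
  forall e, e \in bumplast l b -> e.2 <= B /\ e.1 \in map fst l.
Proof.
case/lastP: l => [|l x] //= H e; rewrite bumplast_rcons mem_rcons inE map_rcons mem_rcons inE.
case/orP => [/eqP -> /=|He]; first by rewrite eqxx; split => //; have := H x; rewrite mem_rcons inE eqxx /=; case: (b) => /(_ isT); lia.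
split; first by apply: ltnW; apply: H; rewrite mem_rcons inE He orbT.
by rewrite (map_f fst He) orbT.
Qed.

Lemma pmap_window (U : Type) (F : nat -> U) a m r :
  pmap (fun k => if (a <= k) && (k < a + m) then Some (F (k - a)) else None) (iota 0 r)
  = map F (iota 0 (minn (r - a) m)).
Proof.
elim: r => [|r IH]; first by rewrite sub0n min0n.
rewrite -addn1 iotaD pmap_cat IH /= add0n.
case: (boolP ((a <= r) && (r < a + m))) => /= h.
- move/andP: h => [h1 h2]. have -> : minn (r + 1 - a) m = minn (r - a) m + 1 by lia.
  by rewrite iotaD map_cat /= add0n; congr (_ ++ [:: F _]); lia.
- rewrite cats0; congr (map F (iota 0 _)); lia.
Qed.

Lemma sum_window a m R :
  \sum_(r < R) ((a <= r) && (r < a + m)) <= m.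
Proof.
suff : \sum_(r < R) ((a <= r) && (r < a + m)) = minn R (a + m) - a by move=> ->; lia.
elim: R => [|R IH]; first by rewrite big_ord0 min0n sub0n.
rewrite big_ord_recr /= IH.
case: (boolP ((a <= R) && (R < a + m))) => h.
- by move/andP: h => [h1 h2]; rewrite /=; lia.
- rewrite addn0; move: h; rewrite negb_and -ltnNge -leqNgt => /orP [h|h]; lia.
Qed.

Lemma find_iota_eq a r : find (fun k => k == a) (iota 0 r) = if a < r then a else r.
Proof.
elim: r => [|r IH] //.
rewrite -addn1 iotaD find_cat IH /= add0n.
have -> : has (fun k => k == a) (iota 0 r) = (a < r).
  by apply/hasP/idP => [[k]|h]; [rewrite mem_iota => /andP[_ h] /eqP <-| exists a; rewrite ?mem_iota].
case: ltnP => h; first (rewrite ifT; lia).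
rewrite size_iota; case: eqP => [<-|ne].
- by rewrite addn0 addn1 ltnSn.
- rewrite ifF //; apply/negbTE; rewrite -leqNgt addn1; lia.
Qed.

Section TreeFacts.
Variables (n : nat) (adj : rel 'I_n) (VT : {set 'I_n}) (p : 'I_n -> 'I_n) (s : 'I_n).
Hypothesis Ht : is_rooted_tree adj VT p s.

Local Notation depth := (depth p s).
Local Notation subtree := (subtree VT p).
Local Notation children := (children VT p s).

Lemma sVT : s \in VT. Proof. by case: Ht. Qed.
Lemma ps : p s = s. Proof. by case: Ht. Qed.
Lemma pVT v : v \in VT -> v != s -> p v \in VT.
Proof. by case: Ht => _ _ H hv hs; case: (H v hv hs). Qed.
Lemma padj v : v \in VT -> v != s -> adj v (p v).
Proof. by case: Ht => _ _ H hv hs; case: (H v hv hs). Qed.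
Lemma iter_s k : iter k p s = s.
Proof. by elim: k => //= k ->; rewrite ps. Qed.
Lemma iterVT k v : v \in VT -> iter k p v \in VT.
Proof.
move=> hv; elim: k => //= k IH; case: (eqVneq (iter k p v) s) => [->|ne].
  by rewrite ps sVT.
exact: pVT.
Qed.
Lemma reach v : v \in VT -> exists k, iter k p v == s.
Proof.
move=> hv; case: (eqVneq v s) => [->|ne]; first by exists 0.
by case: Ht => _ _ H; case: (H v hv ne) => _ _ [k hk]; exists k; apply/eqP.
Qed.
Lemma iter_after k m v : iter m p v = s -> m <= k -> iter k p v = s.
Proof. by move=> hm hk; rewrite -(subnK hk) iterD hm iter_s. Qed.

Lemma depth_spec v : v \in VT ->
  [/\ depth v < n, iter (depth v) p v = s & forall k, k < depth v -> iter k p v != s].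
Proof.
move=> hv; case: (ex_minnP (reach hv)) => m /eqP Hm Hmin.
have lt_m k : (iter k p v != s) = (k < m).
  case: ltnP => hk; last by rewrite (iter_after Hm hk) eqxx.
  apply/negP => /eqP E; have := Hmin k; rewrite E eqxx => /(_ isT); rewrite leqNgt hk.
  by [].
have mn : m < n.
  pose f := fun i : 'I_m.+1 => iter i p v.
  have finj : injective f.
    move=> i j; rewrite /f => E; apply/val_inj => /=.
    wlog lij : i j E / i <= j.
      by move=> W; case: (leqP i j) => h; [apply: W | apply/esym/W => //; apply: ltnW].
    case: (ltngtP i j) => hij //; last lia.
    exfalso.
    have hj : j <= m by rewrite -ltnS.
    have E2 : iter (m - j + i) p v = s by rewrite iterD E -iterD subnK.
    have := lt_m (m - j + i); rewrite E2 eqxx => /esym /negbT; rewrite -leqNgt; lia.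
  by have := leq_card f finj; rewrite !card_ord.
have dm : depth v = m.
  rewrite /Defs.depth (eq_in_count (a2 := fun k => k < m)); last by move=> k _; rewrite lt_m.
  rewrite -(subnK (ltnW mn)) addnC iotaD count_cat add0n.
  rewrite (eq_in_count (a1 := fun k => k < m) (a2 := predT)); last first.
    by move=> k; rewrite mem_iota.
  rewrite (eq_in_count (a1 := fun k => k < m) (a2 := pred0) (s := iota m _)); last first.
    by move=> k; rewrite mem_iota => /andP [h _] /=; rewrite ltnNge h.
  by rewrite count_predT count_pred0 size_iota addn0.
rewrite dm; split => // k hk; by rewrite lt_m.
Qed.

Lemma depth_lt v : v \in VT -> depth v < n. Proof. by case/depth_spec. Qed.
Lemma iter_depth v : v \in VT -> iter (depth v) p v = s. Proof. by case/depth_spec. Qed.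
Lemma iter_lt_depth v k : v \in VT -> k < depth v -> iter k p v != s.
Proof. by case/depth_spec => _ _; apply. Qed.

Lemma depth_uniq v m : v \in VT -> iter m p v = s -> (forall k, k < m -> iter k p v != s) ->
  depth v = m.
Proof.
move=> hv hm hk; case: (ltngtP (depth v) m) => // h.
- by have := hk _ h; rewrite iter_depth // eqxx.
- by have := iter_lt_depth hv h; rewrite hm eqxx.
Qed.

Lemma depth_s : depth s = 0.
Proof. by apply: depth_uniq; rewrite ?sVT. Qed.

Lemma depth_p v : v \in VT -> v != s -> depth v = (depth (p v)).+1.
Proof.
move=> hv hs.
have d0 : 0 < depth v.
  by rewrite lt0n; apply/negP => /eqP E; move: (iter_depth hv); rewrite E /= => /eqP; rewrite (negbTE hs).
rewrite (@depth_uniq (p v) (depth v).-1) ?pVT ?prednK //.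
- by rewrite -iterSr prednK // iter_depth.
- by move=> k hk; rewrite -iterSr; apply: iter_lt_depth => //; rewrite -(prednK d0) ltnS.
Qed.

Lemma depth_iter v k : v \in VT -> k <= depth v -> depth (iter k p v) = depth v - k.
Proof.
move=> hv; elim: k => [|k IH] hk; first by rewrite subn0.
have hk' : k < depth v by [].
have := depth_p (iterVT k hv) (iter_lt_depth hv hk').
rewrite IH ?(ltnW hk') //= => E; lia.
Qed.

Lemma subtreeP v x : v \in VT -> x \in VT ->
  (x \in subtree v) = (depth v <= depth x) && (iter (depth x - depth v) p x == v).
Proof.
move=> hv hx; rewrite /Defs.subtree inE hx /= /anc.
apply/existsP/andP => [[k /eqP hk]|[h1 /eqP h2]].
- case: (leqP k (depth x)) => hkd.
  + have E := depth_iter hx hkd; rewrite hk in E.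
    have -> : depth x - depth v = k by lia.
    by rewrite hk; split => //; rewrite E leq_subr.
  + have vs : v = s by rewrite -hk (iter_after (iter_depth hx) (ltnW hkd)).
    by rewrite vs depth_s subn0 iter_depth // eqxx.
- have hk : depth x - depth v < n by apply: leq_ltn_trans (leq_subr _ _) (depth_lt hx).
  by exists (Ordinal hk); rewrite /= h2.
Qed.

Lemma self_subtree v : v \in VT -> v \in subtree v.
Proof. by move=> hv; rewrite subtreeP // leqnn subnn eqxx. Qed.

Lemma childP c u : c \in children u -> [/\ c \in VT, c != s, p c = u, u \in VT
  & depth c = (depth u).+1].
Proof.
rewrite /Defs.children inE => /andP [hc /andP [hs /eqP hp]].
have hu : u \in VT by rewrite -hp pVT.
by split => //; rewrite -hp depth_p.
Qed.

Lemma no_2cycle u c : c \in children u -> u \notin children c.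
Proof.
move=> /childP [_ _ _ _ d1]; apply/negP => /childP [_ _ _ _ d2]; lia.
Qed.

Lemma sub_trans c u x : c \in children u -> x \in subtree c -> (x \in subtree u) && (x != u).
Proof.
move=> hc; case/childP: (hc) => cVT _ pc uVT dc hx.
have xVT : x \in VT by move: hx; rewrite /Defs.subtree inE => /andP [].
move: hx; rewrite subtreeP // => /andP [h1 /eqP h2].
rewrite subtreeP // (_ : depth x - depth u = (depth x - depth c).+1); last by lia.
rewrite iterS h2 pc eqxx andbT /=; apply/andP; split; first lia.
by apply/negP => /eqP E; move: h1; rewrite dc E; lia.
Qed.

Lemma sub_count u x : u \in VT ->
  \sum_(c in children u) (x \in subtree c) = ((x \in subtree u) && (x != u)).
Proof.
move=> uVT; case: (boolP ((x \in subtree u) && (x != u))) => H.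
- have xVT : x \in VT by move: H; rewrite /Defs.subtree inE => /andP [/andP []].
  move: H; rewrite subtreeP // => /andP [/andP [h1 /eqP h2] hne].
  have lt : depth u < depth x.
    rewrite ltn_neqAle h1 andbT; apply/negP => /eqP E; move: h2; rewrite E subnn /= => E'.
    by move: hne; rewrite E' eqxx.
  pose c0 := iter (depth x - depth u).-1 p x.
  have dc0 : depth c0 = (depth u).+1 by rewrite depth_iter //; lia.
  have c0VT : c0 \in VT by apply: iterVT.
  have hc0 : c0 \in children u.
    rewrite /Defs.children inE c0VT /=; apply/andP; split.
      by apply/negP => /eqP E; move: dc0; rewrite E depth_s.
    by rewrite /c0 -iterS prednK ?h2 // subn_gt0.
  rewrite (bigD1 c0) //= big1 ?addn0.
  + rewrite subtreeP // dc0 lt /=.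
    by rewrite (_ : depth x - (depth u).+1 = (depth x - depth u).-1) ?eqxx //; lia.
  + move=> c /andP [hc hne']; case: (boolP (x \in subtree c)) => hx //=; exfalso.
    case/childP: hc => cVT _ _ _ dc; move: hx; rewrite subtreeP // => /andP [_ /eqP E].
    move: hne'; rewrite -E dc /c0 (_ : depth x - (depth u).+1 = (depth x - depth u).-1) ?eqxx //; lia.
- rewrite big1 // => c hc; case: (boolP (x \in subtree c)) => hx //=; exfalso.
  by move: H; rewrite (sub_trans hc hx).
Qed.

Lemma card_sum (A : {set 'I_n}) : #|A| = \sum_x (x \in A).
Proof. by rewrite -sum1_card big_mkcond /=; apply: eq_bigr => x _; case: (x \in A). Qed.

Lemma sz_rec u : u \in VT -> #|subtree u| = (\sum_(c in children u) #|subtree c|).+1.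
Proof.
move=> uVT.
have -> : \sum_(c in children u) #|subtree c| = \sum_(c in children u) \sum_x (x \in subtree c).
  by apply: eq_bigr => c _; apply: card_sum.
rewrite exchange_big /=.
under eq_bigr => x _ do rewrite sub_count //.
rewrite (cardsD1 u) self_subtree // add1n; congr (_.+1).
by rewrite card_sum; apply: eq_bigr => x _; rewrite !inE andbC.
Qed.

Lemma child_lt u c : c \in children u -> #|subtree c| < #|subtree u|.
Proof.
move=> hc; case/childP: (hc) => _ _ _ uVT _.
by rewrite (sz_rec uVT) ltnS (bigD1 c) //= leq_addr.
Qed.

Lemma light_half u c d : c \in children u -> d \in children u -> c != d ->
  #|subtree c| <= #|subtree d| -> (#|subtree c|).*2 < #|subtree u|.
Proof.
move=> hc hd hne hle; case/childP: (hc) => _ _ _ uVT _.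
rewrite (sz_rec uVT) ltnS (bigD1 c) //= (bigD1 d) /=; last by rewrite hd eq_sym hne.
rewrite -addnn leq_add2l; apply: leq_trans hle (leq_addr _ _).
Qed.

Fixpoint hF k u := if k is k'.+1 then \max_(c in children u) (hF k' c).+1 else 0.
Definition ht u := hF n u.

Lemma hF_stable j : forall u k, u \in VT -> n - depth u <= j -> j <= k -> hF k u = hF j u.
Proof.
elim: j => [|j IH] u k uVT h1 h2.
  by have := depth_lt uVT; lia.
case: k h2 => [|k] // h2 /=; apply: eq_bigr => c hc; congr (_.+1).
case/childP: hc => cVT _ _ _ dc; apply: IH => //; lia.
Qed.

Lemma ht_rec u : u \in VT -> ht u = \max_(c in children u) (ht c).+1.
Proof.
move=> uVT; rewrite /ht; have n0 : 0 < n by apply: leq_ltn_trans (ltn_ord u).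
have -> : hF n u = hF n.-1.+1 u by rewrite prednK.
apply: eq_bigr => c hc; congr (_.+1); case/childP: hc => cVT _ _ _ dc.
symmetry; apply: hF_stable => //; lia.
Qed.

Lemma hF_bound D : (forall v, v \in VT -> depth v <= D) ->
  forall k u, u \in VT -> hF k u + depth u <= D.
Proof.
move=> HD; elim => [|k IH] u uVT /=; first by rewrite add0n HD.
have du := HD u uVT.
apply: (@leq_trans ((D - depth u) + depth u)); last lia.
rewrite leq_add2r; apply/bigmax_leqP => c hc; case/childP: hc => cVT _ _ _ dc.
have := IH c cVT; lia.
Qed.

Lemma ball_depth k w : w \in ball VT p s k -> (w \in VT) && (depth w <= k).
Proof.
elim: k w => [|k IH] w.
  by rewrite /ball /= inE => /eqP ->; rewrite sVT depth_s.
rewrite /ball iterS -/(ball VT p s k) !inE => /orP [/IH /andP [h1 h2]|].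
  by rewrite h1; lia.
case/existsP => x /andP [/IH /andP [xVT dx]].
rewrite /tadj => /and4P [_ wVT hne /orP [/eqP hp|/eqP hp]]; rewrite wVT /=.
- have xs : x != s by apply/negP => /eqP E; move: hne; rewrite -hp E ps eqxx.
  by move: (depth_p xVT xs); rewrite hp; lia.
- have ws : w != s by apply/negP => /eqP E; move: hne; rewrite -hp E ps eqxx.
  by move: (depth_p wVT ws); rewrite hp; lia.
Qed.

Lemma depth_diam v : v \in VT -> depth v <= diam VT p.
Proof.
move=> vVT; rewrite /diam.
set P := (fun k => _).
case: (boolP (has P (iota 0 n))) => H.
- have := nth_find 0 H; rewrite nth_iota; last by move: H; rewrite has_find size_iota.
  rewrite add0n /P => /forallP /(_ s) /implyP /(_ sVT) /forallP /(_ v) /implyP /(_ vVT).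
  by move/ball_depth => /andP [].
- by rewrite hasNfind // size_iota ltnW // depth_lt.
Qed.

End TreeFacts.

Section Comp.
Variables (T : eqType) (light heavy : pred T) (ID : T -> nat).

Definition tm (P : seq T) (v : T) (i : nat) :=
  let L := [seq u <- P | light u] in
  (ID (nth v L i),
   count heavy (take (index (nth v L i.+1) P - index (nth v L i) P).-1
                     (drop (index (nth v L i) P).+1 P))).

Definition compG (P : seq T) (v : T) : seq (nat * nat) :=
  map (tm P v) (iota 0 (size [seq u <- P | light u])).

Lemma take_rcons_le m (D : seq T) x : m <= size D -> take m (rcons D x) = take m D.
Proof. by move=> h; rewrite -cats1 takel_cat. Qed.

Lemma compG_rcons Q q x :
  uniq (rcons (rcons Q q) x) ->
  (forall y, y \in rcons (rcons Q q) x -> light y = ~~ heavy y) ->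
  compG (rcons (rcons Q q) x) x =
  bumplast (compG (rcons Q q) q) (heavy q) ++ (if light x then [:: (ID x, 0)] else [::]).
Proof.
set P0 := rcons Q q => uP HL.
have xP0 : x \notin P0 by move: uP; rewrite rcons_uniq => /andP [].
have uP0 : uniq P0 by move: uP; rewrite rcons_uniq => /andP [].
have qQ : q \notin Q by move: uP0; rewrite rcons_uniq => /andP [].
have sP0 : size P0 = (size Q).+1 by rewrite size_rcons.
have idxP y : y \in P0 -> index y (rcons P0 x) = index y P0.
  by move=> hy; rewrite -cats1 index_cat hy.
have idxx : index x (rcons P0 x) = size P0.
  by rewrite -cats1 index_cat (negbTE xP0) /= eqxx addn0.
have idxq : index q P0 = size Q.
  by rewrite /P0 -cats1 index_cat (negbTE qQ) /= eqxx addn0.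
have HLq : light q = ~~ heavy q by apply: HL; rewrite mem_rcons inE mem_rcons mem_head orbT.
rewrite /compG filter_rcons.
set L0 := [seq u <- P0 | light u].
have L0P y : y \in L0 -> y \in P0 by rewrite mem_filter => /andP [].
have tm_in i : i.+1 < size L0 ->
    tm (rcons P0 x) x i = tm P0 q i.
  move=> hi; rewrite /tm filter_rcons -/L0.
  have hi' : i < size L0 by apply: ltnW.
  have E1 : forall z z', nth z (if light x then rcons L0 x else L0) i = nth z' L0 i.
    by move=> z z'; case: ifP => _; rewrite ?nth_rcons ?hi' //; apply: set_nth_default.
  have E2 : forall z z', nth z (if light x then rcons L0 x else L0) i.+1 = nth z' L0 i.+1.
    by move=> z z'; case: ifP => _; rewrite ?nth_rcons ?hi //; apply: set_nth_default.
  rewrite (E1 x q) (E2 x q).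
  have ha : nth q L0 i \in P0 by apply: L0P; apply: mem_nth.
  have hb : nth q L0 i.+1 \in P0 by apply: L0P; apply: mem_nth.
  rewrite !idxP //; congr (_, count heavy _).
  have ia := index_mem (nth q L0 i) P0; rewrite ha in ia.
  have ib := index_mem (nth q L0 i.+1) P0; rewrite hb in ib.
  rewrite drop_rcons // take_rcons_le // size_drop; lia.
have [eL|[L1 [a eL]]] : L0 = [::] \/ exists L1 a, L0 = rcons L1 a.
  have G (l : seq T) : l = [::] \/ exists L1 a, l = rcons L1 a.
    by case/lastP: l => [|L1 a]; [left|right; exists L1, a].
  exact: G.
-
  rewrite eL /=; case: ifP => lx //=.
  rewrite /tm filter_rcons lx -/L0 eL /= subnn /=.
  by rewrite take0.
- have sL0 : size L0 = (size L1).+1 by rewrite eL size_rcons.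
  have aP0 : a \in P0 by apply: L0P; rewrite eL mem_rcons mem_head.
  have la : light a.
    have : a \in L0 by rewrite eL mem_rcons mem_head.
    by rewrite mem_filter => /andP [].
  have ia := index_mem a P0; rewrite aP0 in ia.
  have -> : size (if light x then rcons L0 x else L0) = (size L1).+1 + light x.
    by case: ifP => _; rewrite ?size_rcons sL0 ?addn1 ?addn0.
  rewrite sL0 -addn1 !iotaD !map_cat /= add0n.
  have -> : forall (A : seq (nat * nat)) e, bumplast (A ++ [:: e]) (heavy q) = A ++ [:: (e.1, e.2 + heavy q)].
    by move=> A e; rewrite !cats1 bumplast_rcons.
  rewrite -!catA.
  congr (_ ++ _).
    apply/eq_in_map => i; rewrite mem_iota add0n => /andP [_ hi].
    by apply: tm_in; rewrite sL0 ltnS.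
  (* the last light vertex before x *)
  have tmA : tm (rcons P0 x) x (size L1) = ((tm P0 q (size L1)).1, (tm P0 q (size L1)).2 + heavy q).
    rewrite /tm filter_rcons -/L0.
    have E1 : forall z, nth z (if light x then rcons L0 x else L0) (size L1) = a.
      by move=> z; case: ifP => _; rewrite ?nth_rcons ?sL0 ?ltnSn eL nth_rcons ltnn eqxx.
    have E2 : nth x (if light x then rcons L0 x else L0) (size L1).+1 = x.
      by case: ifP => _; [rewrite nth_rcons sL0 ltnn eqxx | rewrite nth_default // sL0].
    have E3 : nth q L0 (size L1).+1 = q by rewrite nth_default // sL0.
    have E4 : nth q L0 (size L1) = a by rewrite eL nth_rcons ltnn eqxx.
    rewrite E1 E2 E3 E4 /= idxx idxP // idxq sP0.
    rewrite drop_rcons // take_rcons_le; last by rewrite size_drop; lia.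
    rewrite take_oversize; last by rewrite size_drop; lia.
    case: (ltngtP (index a P0) (size Q)) => h.
    + have D : drop (index a P0).+1 P0 = drop (index a P0).+1 Q ++ [:: q].
        by rewrite /P0 drop_rcons ?cats1.
      have sD : size (drop (index a P0).+1 Q) = (size Q - index a P0).-1 by rewrite size_drop; lia.
      by rewrite D count_cat /= addn0 -sD take_size_cat.
    + lia.
    + have aq : a = q by rewrite -(nth_index q aP0) h -idxq nth_index // mem_rcons mem_head.
      have hq : heavy q = false by apply/negbTE; rewrite -HLq -aq.
      by rewrite hq addn0 h drop_oversize ?sP0.
  rewrite tmA; case: ifP => lx //=.
  congr (_ :: _).
  rewrite /tm filter_rcons lx -/L0.
  have E1 : nth x (rcons L0 x) (size L1).+1 = x by rewrite nth_rcons sL0 ltnn eqxx.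
  have E2 : nth x (rcons L0 x) (size L1).+2 = x by rewrite nth_default // size_rcons sL0.
  by rewrite addn1 E1 E2 subnn take0.
Qed.
End Comp.

Lemma In_mem (T : eqType) (x : T) (s : seq T) : List.In x s -> x \in s.
Proof. elim: s => //= y s IH [->|/IH]; rewrite inE ?eqxx // => ->; by rewrite orbT. Qed.
Lemma mem_In (T : eqType) (x : T) (s : seq T) : x \in s -> List.In x s.
Proof. by elim: s => //= y s IH; rewrite inE => /orP [/eqP ->|/IH]; [left|right]. Qed.

Section TreeHC.
Variables (n : nat) (adj : rel 'I_n) (VT : {set 'I_n}) (p : 'I_n -> 'I_n) (s : 'I_n).
Hypothesis Ht : is_rooted_tree adj VT p s.
Variable hc : 'I_n -> 'I_n.
Variable ID : 'I_n -> nat.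

Local Notation depth := (depth p s).
Local Notation subtree := (subtree VT p).
Local Notation children := (children VT p s).
Local Notation rpath := (rpath p s).
Local Notation heavy := (heavy VT p s hc).
Local Notation light := (light VT p s hc).
Local Notation compressed := (compressed VT p s hc ID).

Lemma VT_ind (P : 'I_n -> Prop) : P s -> (forall v, v \in VT -> v != s -> P (p v) -> P v) ->
  forall v, v \in VT -> P v.
Proof.
move=> Ps IH.
suff H : forall d v, v \in VT -> depth v = d -> P v by move=> v hv; exact: H _ v hv erefl.
elim=> [|d IHd] v hv hd.
  case: (eqVneq v s) => [->//|ne]; by move: hd; rewrite (depth_p Ht hv ne).
have ne : v != s by apply/negP => /eqP E; move: hd; rewrite E (depth_s Ht).
apply: IH => //; apply: IHd; first exact: (pVT Ht hv ne).
by move: hd; rewrite (depth_p Ht hv ne) => -[].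
Qed.

Lemma rpath_s : rpath s = [:: s].
Proof. by rewrite /Defs.rpath (depth_s Ht). Qed.

Lemma rpath_p v : v \in VT -> v != s -> rpath v = rcons (rpath (p v)) v.
Proof.
move=> hv hs; rewrite /Defs.rpath (depth_p Ht hv hs) [traject _ _ _.+2]/= rev_cons.
by [].
Qed.

Lemma rpath_mem v : v \in VT -> forall x, x \in rpath v -> (x \in VT) && (depth x <= depth v).
Proof.
move: v; apply: (VT_ind (P := fun v => forall x, x \in rpath v -> (x \in VT) && (depth x <= depth v))) => [|v hv hs IH] x.
  by rewrite rpath_s inE => /eqP ->; rewrite (sVT Ht) leqnn.
rewrite rpath_p // mem_rcons inE => /orP [/eqP ->|/IH /andP [h1 h2]].
  by rewrite hv leqnn.
by rewrite h1 (depth_p Ht hv hs) ltnW.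
Qed.

Lemma rpath_uniq v : v \in VT -> uniq (rpath v).
Proof.
move: v; apply: (VT_ind (P := fun v => uniq (rpath v))) => [|v hv hs IH]; first by rewrite rpath_s.
rewrite rpath_p // rcons_uniq IH andbT; apply/negP => /(rpath_mem (pVT Ht hv hs)) /andP [_].
by rewrite (depth_p Ht hv hs) ltnn.
Qed.

Lemma rpath_rcons v : v \in VT -> exists Q, rpath v = rcons Q v.
Proof.
move=> hv; case: (eqVneq v s) => [->|hs]; first by exists [::]; rewrite rpath_s.
by exists (rpath (p v)); rewrite rpath_p.
Qed.

Lemma heavy_s : heavy s = false.
Proof. by rewrite /Defs.heavy eqxx andbF. Qed.

Lemma compressed_s : compressed s = [:: (ID s, 0)].
Proof.
by rewrite /Defs.compressed rpath_s /= /Defs.light (sVT Ht) heavy_s /=.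
Qed.

Lemma light_VT x : x \in VT -> light x = ~~ heavy x.
Proof. by rewrite /Defs.light => ->. Qed.

Lemma comp_rec v : v \in VT -> v != s ->
  compressed v = bumplast (compressed (p v)) (heavy (p v)) ++
                 (if light v then [:: (ID v, 0)] else [::]).
Proof.
move=> hv hs; have pv := pVT Ht hv hs.
case: (rpath_rcons pv) => Q eQ.
have E : forall u, compressed u = compG light heavy ID (rpath u) u by [].
rewrite !E rpath_p // eQ compG_rcons //.
- by rewrite -eQ -rpath_p // rpath_uniq.
- by move=> y; rewrite -eQ -rpath_p // => /(rpath_mem hv) /andP [h _]; apply: light_VT.
Qed.

Lemma size_comp v : size (compressed v) = count light (rpath v).
Proof. by rewrite /Defs.compressed size_map size_iota size_filter. Qed.

Lemma comp_entries v : v \in VT -> forall e, e \in compressed v ->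
  (exists y, e.1 = ID y) /\ e.2 <= depth v.
Proof.
move=> hv e; rewrite /Defs.compressed => /mapP [i _ ->] /=; split; first by eexists.
apply: leq_trans (count_size _ _) _; rewrite size_take_min size_drop.
apply: leq_trans (geq_minr _ _) _.
by rewrite /Defs.rpath size_rev size_traject; lia.
Qed.

Lemma count_light_pos v : v \in VT -> 0 < count light (rpath v).
Proof.
move: v; apply: (VT_ind (P := fun v => 0 < count light (rpath v))) => [|v hv hs IH]; first by rewrite rpath_s /= /Defs.light (sVT Ht) heavy_s.
by rewrite rpath_p // -cats1 count_cat; apply: leq_trans IH (leq_addr _ _).
Qed.

Hypothesis Hhc : heavy_choice VT p s hc.

Lemma light_count_bound v : v \in VT ->
  2 ^ (count light (rpath v)) * #|subtree v| <= (#|subtree s|).*2.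
Proof.
move: v; apply: (VT_ind (P := fun v => 2 ^ (count light (rpath v)) * #|subtree v| <= (#|subtree s|).*2)) => [|v hv hs IH].
  by rewrite rpath_s /= /Defs.light (sVT Ht) heavy_s /= expn1 mul2n.
have pv := pVT Ht hv hs.
have vch : v \in children (p v) by rewrite /Defs.children inE hv hs eqxx.
rewrite rpath_p // -cats1 count_cat /= addn0.
case: (boolP (light v)) => lv /=.
- have hne : children (p v) != set0 by apply/set0Pn; exists v.
  have [hin hmax] := Hhc pv hne.
  have ne : v != hc (p v).
    by move: lv; rewrite /Defs.light /Defs.heavy hv hs /= eq_sym.
  have H2 := light_half Ht vch hin ne (hmax v vch).
  apply: leq_trans IH; rewrite expnD expn1 -mulnA leq_mul2l mul2n.
  by rewrite ltnW ?orbT.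
- rewrite addn0; apply: leq_trans IH; rewrite leq_mul2l ltnW ?orbT //.
  have := child_lt Ht vch. move=> H; exact H.
Qed.

Lemma light_count_lg v : v \in VT -> count light (rpath v) <= lg n.
Proof.
move=> hv; have H := light_count_bound hv.
have s1 : 0 < #|subtree v| by apply/card_gt0P; exists v; exact: (self_subtree Ht hv).
have H2 : 2 ^ (count light (rpath v)) <= n.*2.
  apply: leq_trans (_ : _ <= 2 ^ count light (rpath v) * #|subtree v|) _.
    by rewrite leq_pmulr.
  apply: leq_trans H _; rewrite leq_double.
  by apply: leq_trans (max_card _) _; rewrite card_ord.
have H3 : n.*2 < 2 ^ (lg n).+1.
  by rewrite expnS mul2n ltn_double; apply: trunc_log_ltn.
by rewrite -ltnS -(ltn_exp2l _ _ (isT : 1 < 2)); apply: leq_ltn_trans H2 H3.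
Qed.

End TreeHC.

Definition Hist := seq (nat -> option (seq bool)).
Definition rcv (h : Hist) k j : option (seq bool) := nth (fun _ => None) h k j.
Definition got (h : Hist) i j := has (fun k => isSome (rcv h k j)) (iota 0 i).
Definition kall (li : LocalInput) (h : Hist) i := all (got h i) (li_children li).
Definition csize (h : Hist) j := dec (head [::] (pmap (fun k => rcv h k j) (iota 0 (size h)))).
Definition mysize li h := (sumn (map (csize h) (li_children li))).+1.
Definition hcid li h := sel (csize h) 0 (li_children li).
Definition isroot (li : LocalInput) := li_parent li == None.
Definition pid (li : LocalInput) := odflt 0 (li_parent li).
Definition pmsgs li (h : Hist) := pmap (fun k => rcv h k (pid li)) (iota 0 (size h)).
Definition informed li h := has lflag (pmsgs li h).
Definition tstart li (h : Hist) :=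
  if isroot li then find (kall li h) (iota 0 (size h).+1)
  else (find (fun k => if rcv h k (pid li) is Some m then lflag m else false) (iota 0 (size h))).+1.
Definition myheavy li h := if isroot li then false else nth false (head [::] (pmsgs li h)) 0.
Definition mycomp W li h :=
  if isroot li then [:: (li_id li, 0)]
  else map (decpair W) (pmsgs li h) ++ (if myheavy li h then [::] else [:: (li_id li, 0)]).
Definition myY W li h := bumplast (mycomp W li h) (myheavy li h).
Definition Wd cid (li : LocalInput) := cid.+1 * lg (li_n li).

Definition asend cid (st : LocalInput * Hist) (j : nat) : option (seq bool) :=
  let: (li, h) := st in
  let r := size h in
  let W := Wd cid li in
  if ~~ li_inT li then None else
  if (li_parent li == Some j) && kall li h r && ((r == 0) || ~~ kall li h r.-1)
  then Some (enc W (mysize li h))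
  else
    let Y := myY W li h in
    let t := tstart li h in
    if [&& j \in li_children li, t <= r & r < t + size Y]
    then Some (downmsg W (j == hcid li h) (r - t == (size Y).-1) (nth (0, 0) Y (r - t)))
    else None.

Definition aout cid (st : LocalInput * Hist) : option Output :=
  let: (li, h) := st in
  if ~~ li_inT li then None
  else if isroot li || informed li h then Some (myheavy li h, mycomp (Wd cid li) li h)
  else None.

Definition Algo cid : Alg :=
  {| St := LocalInput * Hist;
     a_init := fun li => (li, [::]);
     a_send := asend cid;
     a_recv := fun st f => (st.1, rcons st.2 f);
     a_out := aout cid |}.

Lemma find_iota_ge a r : find (fun k => a <= k) (iota 0 r) = minn a r.
Proof.
elim: r => [|r IH]; first by rewrite minn0.
rewrite -addn1 iotaD find_cat IH /= add0n.
have -> : has (fun k => a <= k) (iota 0 r) = (a < r).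
  apply/hasP/idP => [[k]|h]; first by rewrite mem_iota => /andP [_ h1] h2; lia.
  by exists a; rewrite ?mem_iota.
case: ltnP => h; first lia.
rewrite size_iota; case: leqP => h'; lia.
Qed.

Lemma pmap_single (U : Type) (x : U) a r :
  pmap (fun k => if k == a then Some x else None) (iota 0 r) = if a < r then [:: x] else [::].
Proof.
transitivity (pmap (fun k => if (a <= k) && (k < a + 1) then Some ((fun _ : nat => x) (k - a)) else None) (iota 0 r)).
  apply: eq_pmap => k; case: eqP => [->|ne]; first by rewrite leqnn addn1 ltnSn.
  by case: ifP => // /andP [h1 h2]; exfalso; apply: ne; lia.
rewrite pmap_window; case: ltnP => h.
- by rewrite (_ : minn (r - a) 1 = 1) //; lia.
- by rewrite (_ : minn (r - a) 1 = 0) //; lia.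
Qed.

Section Spec.
Variables (cid n : nat) (adj : rel 'I_n) (ID : 'I_n -> nat) (VT : {set 'I_n})
          (p : 'I_n -> 'I_n) (s : 'I_n).
Hypothesis Hinj : injective ID.
Hypothesis Hbd : forall v, ID v < n ^ cid.
Hypothesis Ht : is_rooted_tree adj VT p s.

Local Notation depth := (depth p s).
Local Notation subtree := (subtree VT p).
Local Notation children := (children VT p s).
Local Notation rpath := (rpath p s).

Definition sz u := #|subtree u|.
Definition hcg u := sel sz u (enum (children u)).
Local Notation heavy := (heavy VT p s hcg).
Local Notation light := (light VT p s hcg).
Local Notation compressed := (compressed VT p s hcg ID).
Definition hgt u := ht VT p s u.
Definition Yg u := bumplast (compressed u) (heavy u).
Fixpoint tF k u := if k is k'.+1 then tF k' (p u) + size (Yg (p u)) else hgt s.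
Definition tg u := tF (depth u) u.
Definition W := cid.+1 * lg n.
Definition loc := local_input adj ID VT p s.

Definition spec (r : nat) (u w : 'I_n) : option (seq bool) :=
  if [&& u \in VT, u != s, w == p u & r == hgt u] then Some (enc W (sz u))
  else if [&& w \in children u, tg u <= r & r < tg u + size (Yg u)]
  then Some (downmsg W (hcg u == w) (r - tg u == (size (Yg u)).-1) (nth (0, 0) (Yg u) (r - tg u)))
  else None.

Lemma hcg_choice : heavy_choice VT p s hcg.
Proof.
move=> v hv hne; rewrite /hcg /sel.
have [x hx] := set0Pn _ hne.
have lne : enum (children v) <> [::].
  by move=> E; move: (mem_enum (children v) x); rewrite E hx.
split.
- case: (selr_in sz (head v (enum (children v))) (enum (children v))) => [->|/In_mem].
    by case: (enum (children v)) lne (mem_enum (children v)) => [//|y l] _ <-; rewrite mem_head.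
  by rewrite mem_enum.
- move=> u hu; have [_ H] := selr_ge sz (head v (enum (children v))) (enum (children v)).
  by apply: H; apply: mem_In; rewrite mem_enum.
Qed.

Lemma lgn_pos : 0 < lg n. Proof. by []. Qed.

Lemma n_lt : n < 2 ^ W.
Proof.
apply: leq_trans (trunc_log_ltn _ (isT : 1 < 2)) _; rewrite leq_exp2l //.
by rewrite /W /lg mulSn leq_addr.
Qed.

Lemma ID_lt y : ID y < 2 ^ W.
Proof.
apply: leq_trans (Hbd y) _.
have h1 : n <= 2 ^ lg n by apply: ltnW; apply: trunc_log_ltn.
have h2 : forall c, n ^ c <= (2 ^ lg n) ^ c.
  elim => [|c IH]; first exact: leqnn.
  by rewrite (expnS n) (expnS (2 ^ lg n)); apply: leq_mul.
apply: leq_trans (h2 cid) _; rewrite -expnM leq_exp2l // /W mulnC; lia.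
Qed.

Lemma size_Yg v : size (Yg v) = count light (rpath v).
Proof. by rewrite /Yg size_bumplast size_comp. Qed.

Lemma Yg_entries v : v \in VT -> forall e, e \in Yg v -> e.1 < 2 ^ W /\ e.2 < 2 ^ W.
Proof.
move=> hv e he.
have H : forall e, e \in compressed v -> e.2 < n.
  by move=> e' /(comp_entries hv) [_ h]; apply: leq_ltn_trans h (depth_lt Ht hv).
have [h1 h2] := bumplast_bound H he.
split; last by apply: leq_ltn_trans h1 n_lt.
case/mapP: h2 => e' /(comp_entries hv) [[y ->] _] ->; exact: ID_lt.
Qed.

Lemma spec_up c u k : c \in children u ->
  spec k c u = if k == hgt c then Some (enc W (sz c)) else None.
Proof.
move=> hc; case: (childP Ht hc) => cVT cs pc uVT _.
rewrite /spec cVT cs -pc eqxx /=.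
case: (k == hgt c) => //.
by rewrite pc (negbTE (no_2cycle Ht hc)).
Qed.

Definition Fdown u j := downmsg W (hcg (p u) == u) (j == (size (Yg (p u))).-1) (nth (0, 0) (Yg (p u)) j).

Lemma spec_down u k : u \in VT -> u != s ->
  spec k (p u) u = if (tg (p u) <= k) && (k < tg (p u) + size (Yg (p u)))
                   then Some (Fdown u (k - tg (p u))) else None.
Proof.
move=> hu hs.
have uch : u \in children (p u) by rewrite /Defs.children inE hu hs eqxx.
rewrite /spec uch /=.
have -> : (u == p (p u)) = false.
  apply/negbTE/negP => /eqP E.
  have pu := pVT Ht hu hs.
  have ps' : p u != s by apply/negP => /eqP E'; move: hs; rewrite E E' (ps Ht) eqxx.
  have := depth_p Ht hu hs; have := depth_p Ht pu ps'; rewrite -E; lia.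
by rewrite !andbF.
Qed.

Lemma tg_s : tg s = hgt s.
Proof. by rewrite /tg (depth_s Ht). Qed.

Lemma tg_p v : v \in VT -> v != s -> tg v = tg (p v) + size (Yg (p v)).
Proof. by move=> hv hs; rewrite /tg (depth_p Ht hv hs). Qed.

Lemma Yg_pos v : v \in VT -> 0 < size (Yg v).
Proof. by move=> hv; rewrite size_Yg; apply: (count_light_pos Ht). Qed.

Lemma Yg_lg v : v \in VT -> size (Yg v) <= lg n.
Proof. by move=> hv; rewrite size_Yg; apply: (light_count_lg Ht hcg_choice hv). Qed.

Lemma hgt_p v : v \in VT -> v != s -> hgt v < hgt (p v).
Proof.
move=> hv hs; have pv := pVT Ht hv hs.
rewrite /hgt (ht_rec Ht pv).
have vch : v \in children (p v) by rewrite /Defs.children inE hv hs eqxx.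
exact: (@leq_bigmax_cond _ (fun c => c \in children (p v)) (fun c => (ht VT p s c).+1) v vch).
Qed.

Lemma hgt_tg v : v \in VT -> hgt v <= tg v.
Proof.
move: v; apply: (VT_ind Ht (P := fun v => hgt v <= tg v)) => [|v hv hs IH].
  by rewrite tg_s.
rewrite tg_p //; have := hgt_p hv hs; have := Yg_pos (pVT Ht hv hs); lia.
Qed.

Lemma tg_bound v : v \in VT -> tg v <= hgt s + depth v * lg n.
Proof.
move: v; apply: (VT_ind Ht (P := fun v => tg v <= hgt s + depth v * lg n)) => [|v hv hs IH].
  by rewrite tg_s (depth_s Ht) mul0n addn0.
rewrite tg_p // (depth_p Ht hv hs) mulSn; have := Yg_lg (pVT Ht hv hs); lia.
Qed.

Lemma Yg_s : Yg s = [:: (ID s, 0)].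
Proof. by rewrite /Yg (compressed_s Ht) heavy_s. Qed.

Definition Inv r v (st : LocalInput * Hist) :=
  [/\ st.1 = loc v, size st.2 = r &
      forall i u, i < r -> adj u v -> rcv st.2 i (ID u) = spec i u v].

Lemma child_adj c u : c \in children u -> adj c u.
Proof. by move=> hc; case: (childP Ht hc) => cVT cs pc _ _; rewrite -pc; apply: (padj Ht). Qed.

Lemma kallE r u h : u \in VT -> Inv r u (loc u, h) ->
  forall i, i <= r -> kall (loc u) h i = (hgt u <= i).
Proof.
move=> uVT [_ sh Hh] i hi.
rewrite /kall /= all_map.
rewrite (eq_in_all (a2 := fun c => hgt c < i)); last first.
  move=> c; rewrite mem_enum => hc /=; rewrite /got.
  rewrite (eq_in_has (a2 := fun k => k == hgt c)); last first.
    move=> k; rewrite mem_iota => /andP [_ hk] /=.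
    rewrite Hh; [|lia|exact: child_adj hc].
    by rewrite spec_up //; case: (k == hgt c).
  by rewrite has_pred1 mem_iota.
rewrite /hgt (ht_rec Ht uVT); apply/allP/bigmax_leqP => H c hc.
- by apply: H; rewrite mem_enum.
- by apply: H; move: hc; rewrite mem_enum.
Qed.

Lemma csizeE r u h c : u \in VT -> Inv r u (loc u, h) -> c \in children u -> hgt c < r ->
  csize h (ID c) = sz c.
Proof.
move=> uVT [_ sh Hh] hc hr.
rewrite /csize sh (eq_in_pmap (f2 := fun k => if k == hgt c then Some (enc W (sz c)) else None)).
  rewrite pmap_single hr; change (dec (enc W (sz c)) = sz c); rewrite dec_enc //; apply: (leq_ltn_trans _ n_lt).
  by apply: leq_trans (max_card _) _; rewrite card_ord.
move=> k; rewrite mem_iota => /andP [_ hk].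
rewrite Hh; [|lia|exact: child_adj hc].
by rewrite spec_up.
Qed.

Lemma mysizeE r u h : u \in VT -> Inv r u (loc u, h) -> hgt u <= r ->
  mysize (loc u) h = sz u.
Proof.
move=> uVT I hr; rewrite /mysize /= -map_comp.
have -> : map (csize h \o ID) (enum (children u)) = map sz (enum (children u)).
  apply/eq_in_map => c; rewrite mem_enum => hc /=; apply (csizeE uVT I hc).
  apply: leq_trans hr; rewrite /hgt (ht_rec Ht uVT).
  exact: (@leq_bigmax_cond _ (fun c => c \in children u) (fun c => (ht VT p s c).+1) _ hc).
rewrite sumnE big_map big_enum /= /sz (sz_rec Ht uVT).
by [].
Qed.

Lemma hcidE r u h w : u \in VT -> Inv r u (loc u, h) -> hgt u <= r -> w \in children u ->
  hcid (loc u) h = ID (hcg u).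
Proof.
move=> uVT I hr hw; rewrite /hcid /= /hcg /sel.
case E: (enum (children u)) => [|x l] /=; first by move: hw; rewrite -mem_enum E.
have hmem : forall a, List.In a (x :: l) -> a \in children u.
  move=> a /In_mem ha.
  have : a \in enum (children u) by rewrite E.
  by rewrite mem_enum.
rewrite -(selr_map (f := sz) (f' := csize h)); first by rewrite !ltnn.
move=> a; rewrite ltnn => ha; have hc := hmem a ha; apply: (csizeE uVT I hc).
apply: leq_trans hr; rewrite /hgt (ht_rec Ht uVT).
exact: (@leq_bigmax_cond _ (fun c => c \in children u) (fun c => (ht VT p s c).+1) _ hc).
Qed.


Hypothesis Hsym : symmetric adj.

Lemma arith_once a r : (a <= r) && ((r == 0) || ~~ (a <= r.-1)) = (r == a).
Proof.
case: r => [|r] /=; first by rewrite leqn0 eq_sym andbT.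
rewrite -ltnNge; apply/andP/eqP => [[h1 h2]|->]; first lia.
by split.
Qed.

Lemma loc_parent u : li_parent (loc u) = if (u \in VT) && (u != s) then Some (ID (p u)) else None.
Proof. by []. Qed.

Lemma pmsgsE r u h : u \in VT -> u != s -> Inv r u (loc u, h) ->
  pmsgs (loc u) h = map (Fdown u) (iota 0 (minn (r - tg (p u)) (size (Yg (p u))))).
Proof.
move=> uVT us [_ sh Hh].
have hpid : pid (loc u) = ID (p u) by rewrite /pid loc_parent uVT us.
rewrite /pmsgs hpid sh -pmap_window; apply: eq_in_pmap => k; rewrite mem_iota => /andP [_ hk].
rewrite Hh //; last by rewrite Hsym; apply: (padj Ht).
by rewrite spec_down.
Qed.

Lemma lflag_F u j : lflag (Fdown u j) = (j == (size (Yg (p u))).-1).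
Proof. by []. Qed.

Lemma informedE r u h : u \in VT -> u != s -> Inv r u (loc u, h) ->
  informed (loc u) h = (tg u <= r).
Proof.
move=> uVT us I; rewrite /informed (pmsgsE uVT us I) has_map.
have pu := pVT Ht uVT us; have y0 := Yg_pos pu.
rewrite (eq_has (a2 := pred1 (size (Yg (p u))).-1)); last by move=> j /=; rewrite lflag_F.
rewrite has_pred1 mem_iota add0n (tg_p uVT us) /=.
apply/idP/idP; lia.
Qed.

Lemma tstart_nonroot r u h : u \in VT -> u != s -> Inv r u (loc u, h) ->
  tstart (loc u) h = (if (tg u).-1 < r then (tg u).-1 else r).+1.
Proof.
move=> uVT us I; have [_ sh Hh] := I.
have pu := pVT Ht uVT us; have y0 := Yg_pos pu.
have hpid : pid (loc u) = ID (p u) by rewrite /pid loc_parent uVT us.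
have nr : isroot (loc u) = false by rewrite /isroot loc_parent uVT us.
rewrite /tstart nr hpid sh -find_iota_eq; congr (_.+1).
apply: eq_in_find => k; rewrite mem_iota => /andP [_ hk].
rewrite Hh //; last by rewrite Hsym; apply: (padj Ht).
rewrite spec_down // (tg_p uVT us).
case: ifP => /= hw; rewrite ?lflag_F; move: hw; first (move=> /andP [h1 h2]; apply/eqP/eqP; lia).
move=> /negbT; rewrite negb_and -ltnNge -leqNgt => /orP [hh|hh]; apply/esym/negbTE/eqP; lia.
Qed.

Lemma nth_Fdown0 u j : nth false (Fdown u j) 0 = (hcg (p u) == u).
Proof. by []. Qed.

Lemma mycompE r u h : u \in VT -> u != s -> Inv r u (loc u, h) -> tg u <= r ->
  myheavy (loc u) h = heavy u /\ mycomp (Wd cid (loc u)) (loc u) h = compressed u.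
Proof.
move=> uVT us I hr.
have pu := pVT Ht uVT us; have y0 := Yg_pos pu.
have nr : isroot (loc u) = false by rewrite /isroot loc_parent uVT us.
have hP : pmsgs (loc u) h = map (Fdown u) (iota 0 (size (Yg (p u)))).
  rewrite (pmsgsE uVT us I); congr (map _ (iota 0 _)); move: hr; rewrite (tg_p uVT us); lia.
have hH : myheavy (loc u) h = heavy u.
  rewrite /myheavy nr hP; case: (size (Yg (p u))) y0 => [|k] //= _.
  by rewrite /Defs.heavy uVT us.
split => //.
rewrite /mycomp nr hH hP -map_comp.
have -> : map (decpair (Wd cid (loc u)) \o Fdown u) (iota 0 (size (Yg (p u)))) = Yg (p u).
  rewrite -[RHS](mkseq_nth (0, 0)) /mkseq; apply/eq_in_map => j; rewrite mem_iota => /andP [_ hj] /=.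
  have he : nth (0, 0) (Yg (p u)) j \in Yg (p u) by apply: mem_nth.
  have [h1 h2] := Yg_entries pu he.
  by rewrite /Fdown decpair_down.
rewrite (comp_rec Ht hcg ID uVT us) (light_VT p s hcg uVT) /=.
by case: (heavy u).
Qed.

Lemma root_facts r h : Inv r s (loc s, h) ->
  [/\ tstart (loc s) h = minn (hgt s) r.+1, myY (Wd cid (loc s)) (loc s) h = Yg s,
      myheavy (loc s) h = heavy s & mycomp (Wd cid (loc s)) (loc s) h = compressed s].
Proof.
move=> I; have [_ sh _] := I.
have rt : isroot (loc s) = true by rewrite /isroot loc_parent eqxx andbF.
rewrite /tstart /myY /myheavy /mycomp rt Yg_s (compressed_s Ht) heavy_s sh; split => //.
rewrite -find_iota_ge; apply: eq_in_find => i; rewrite mem_iota => /andP [_ hi].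
by rewrite (kallE (sVT Ht) I).
Qed.

Lemma tstY r u h : u \in VT -> Inv r u (loc u, h) -> tg u <= r ->
  tstart (loc u) h = tg u /\ myY (Wd cid (loc u)) (loc u) h = Yg u.
Proof.
move=> uVT I hr; case: (eqVneq u s) => [E|us].
  move: I hr; rewrite E => I hr; have [-> -> _ _] := root_facts I.
  by rewrite tg_s in hr *; split => //; lia.
have pu := pVT Ht uVT us; have y0 := Yg_pos pu.
split.
  rewrite (tstart_nonroot uVT us I); move: hr; rewrite (tg_p uVT us).
  case: ifP => h1 h2; lia.
by have [h1 h2] := mycompE uVT us I hr; rewrite /myY h1 h2.
Qed.

Lemma tstart_gt r u h : u \in VT -> Inv r u (loc u, h) -> r < tg u -> r < tstart (loc u) h.
Proof.
move=> uVT I hr; case: (eqVneq u s) => [E|us].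
  move: I hr; rewrite E tg_s => I hr; have [-> _ _ _] := root_facts I; lia.
rewrite (tstart_nonroot uVT us I); case: ifP => h1; lia.
Qed.

Lemma asend_unfold li h j : asend cid (li, h) j =
  if ~~ li_inT li then None else
  if (li_parent li == Some j) && kall li h (size h) && ((size h == 0) || ~~ kall li h (size h).-1)
  then Some (enc (Wd cid li) (mysize li h))
  else if [&& j \in li_children li, tstart li h <= size h &
              size h < tstart li h + size (myY (Wd cid li) li h)]
  then Some (downmsg (Wd cid li) (j == hcid li h)
         (size h - tstart li h == (size (myY (Wd cid li) li h)).-1)
         (nth (0, 0) (myY (Wd cid li) li h) (size h - tstart li h)))
  else None.
Proof. by []. Qed.

Lemma Wd_loc u : Wd cid (loc u) = W. Proof. by []. Qed.
Lemma inT_loc u : li_inT (loc u) = (u \in VT). Proof. by []. Qed.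
Lemma children_loc u : li_children (loc u) = map ID (enum (children u)). Proof. by []. Qed.

Lemma sendE r u h w : Inv r u (loc u, h) -> asend cid (loc u, h) (ID w) = spec r u w.
Proof.
move=> I; have [_ sh Hh] := I.
rewrite asend_unfold inT_loc Wd_loc.
case: (boolP (u \in VT)) => uVT; last first.
  rewrite /= /spec (negbTE uVT) /=; case: (boolP (w \in children u)) => hw //=.
  by case: (childP Ht hw) => _ _ _ uVT' _; move: uVT; rewrite uVT'.
rewrite [~~ true]/= sh (kallE uVT I (leqnn r)) (kallE uVT I (leq_pred r)) -andbA arith_once.
have -> : (li_parent (loc u) == Some (ID w)) = (u != s) && (w == p u).
  rewrite loc_parent uVT [true && _]/=; case: (u != s) => //.
  by apply/eqP/eqP => [[/Hinj ->]|->].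
rewrite /spec uVT [true && _]/= -andbA.
case: ifP => Hc.
  rewrite (mysizeE uVT I) //; move: Hc => /andP [_ /andP [_ /eqP ->]] //.
have -> : (ID w \in li_children (loc u)) = (w \in children u).
  by rewrite children_loc mem_map // mem_enum.
case: (boolP (w \in children u)) => hw; last by [].
case: (leqP (tg u) r) => hr.
- have [-> ->] := tstY uVT I hr; rewrite hr [true && _]/=.
  case: ifP => // _.
  rewrite (hcidE uVT I _ hw) ?(inj_eq Hinj) 1?eq_sym //.
  exact: leq_trans (hgt_tg uVT) hr.
- have := tstart_gt uVT I hr; rewrite ltnNge => /negbTE ->.
  by [].
Qed.

Lemma outE r v h : v \in VT -> Inv r v (loc v, h) ->
  aout cid (loc v, h) = if (v == s) || (tg v <= r) then Some (heavy v, compressed v) else None.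
Proof.
move=> vVT I; rewrite /aout /= vVT /=.
case: (eqVneq v s) => [E|vs] /=.
  move: I; rewrite E => I; have [_ _ -> ->] := root_facts I.
  by rewrite /isroot loc_parent eqxx andbF.
have nr : isroot (loc v) = false by rewrite /isroot loc_parent vVT vs.
rewrite nr (informedE vVT vs I) /=; case: ifP => // hr.
by have [-> ->] := mycompE vVT vs I hr.
Qed.

Lemma exec_step r v : exec (Algo cid) adj ID loc r.+1 v =
  ((exec (Algo cid) adj ID loc r v).1,
   rcons (exec (Algo cid) adj ID loc r v).2
     (fun j => match [pick u | adj u v && (ID u == j)] with
               | Some u => asend cid (exec (Algo cid) adj ID loc r u) (ID v)
               | None => None end)).
Proof. by []. Qed.

Lemma exec_inv r v : Inv r v (exec (Algo cid) adj ID loc r v).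
Proof.
elim: r v => [|r IH] v; first by split.
have [h1 h2 h3] := IH v.
rewrite exec_step; split; [by [] | by rewrite size_rcons h2 |].
move=> i u hi hadj; rewrite /rcv nth_rcons h2.
case: ltnP => hir; first by apply: h3.
have -> : i = r by lia.
rewrite eqxx.
case: pickP => [u' /andP [hadj' /eqP hid]|H]; last by have := H u; rewrite hadj eqxx.
have -> : u' = u by apply: Hinj.
case E: (exec (Algo cid) adj ID loc r u) => [li' h'].
have := IH u; rewrite E => I'; have [/= hli _ _] := I'.
move: I'; rewrite hli => I'.
exact (sendE v I').
Qed.

Lemma st_spec r u w : asend cid (exec (Algo cid) adj ID loc r u) (ID w) = spec r u w.
Proof.
case E: (exec (Algo cid) adj ID loc r u) => [li h].
have := exec_inv r u; rewrite E => I; have [/= hli _ _] := I.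
move: I; rewrite hli => I; exact (sendE w I).
Qed.

Lemma st_out r v : v \in VT -> aout cid (exec (Algo cid) adj ID loc r v) =
  if (v == s) || (tg v <= r) then Some (heavy v, compressed v) else None.
Proof.
move=> vVT; case E: (exec (Algo cid) adj ID loc r v) => [li h].
have := exec_inv r v; rewrite E => I; have [/= hli _ _] := I.
move: I; rewrite hli => I; exact (outE vVT I).
Qed.

Lemma spec_size r u w m : spec r u w = Some m -> size m <= (2 * cid + 4) * lg n.
Proof.
rewrite /spec; case: ifP => _.
  move=> E; have -> : m = enc W (sz u) by congruence.
  by rewrite size_enc /W leq_mul2r; apply/orP; right; lia.
case: ifP => _ // E.
set dm := downmsg _ _ _ _ in E.
have -> : m = dm by congruence.
rewrite /dm size_downmsg /W.
have := lgn_pos; nia.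
Qed.

Lemma spec_count R u w : \sum_(r < R) isSome (spec r u w) <= (lg n).+1.
Proof.
pose m := if u \in VT then size (Yg u) else 0.
apply: (@leq_trans (\sum_(r < R) (((hgt u <= r) && (r < hgt u + 1)) + ((tg u <= r) && (r < tg u + m))))).
  apply: leq_sum => r _; rewrite /spec.
  case: ifP => [/and4P [_ _ _ /eqP ->]|_]; first by rewrite leqnn addn1 ltnSn.
  case: ifP => [/and3P [hw h1 h2]|_] //.
  case: (childP Ht hw) => _ _ _ uVT _.
  have -> : (tg u <= r) && (r < tg u + m) by rewrite /m uVT h1 h2.
  by rewrite /= addn1.
rewrite big_split /=; apply: (@leq_trans (1 + lg n)); last by rewrite add1n.
apply: leq_add; first exact: sum_window.
apply: leq_trans (sum_window _ _ _) _.
by rewrite /m; case: ifP => // uVT; apply: Yg_lg.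
Qed.

Lemma hgt_diam : hgt s <= diam VT p.
Proof.
have := hF_bound Ht (depth_diam Ht) n (sVT Ht).
by rewrite (depth_s Ht) addn0.
Qed.

End Spec.

Theorem lemma1p3 (cid : nat) :
  exists (A : Alg) (cb c k : nat),
  forall (n : nat) (adj : rel 'I_n) (ID : 'I_n -> nat)
         (VT : {set 'I_n}) (p : 'I_n -> 'I_n) (s : 'I_n),
    symmetric adj -> irreflexive adj ->
    injective ID -> (forall v, ID v < n ^ cid) ->
    is_rooted_tree adj VT p s ->
    let loc := local_input adj ID VT p s in
    let st := exec A adj ID loc in
    exists (R : nat) (hc : 'I_n -> 'I_n),
      [/\ R <= c * (diam VT p).+1 * lg n ^ k,
          heavy_choice VT p s hc,
          (* message size O(log n) *)
          (forall r u v m, r < R -> adj u v ->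
             @a_send A (st r u) (ID v) = Some m -> size m <= cb * lg n),
          (* congestion polylog(n) *)
          (forall u v, adj u v ->
             \sum_(r < R) (isSome (@a_send A (st r u) (ID v))
                           + isSome (@a_send A (st r v) (ID u)))
             <= c * lg n ^ k)
        & (* correct knowledge at the end, never a wrong output before *)
          forall v, v \in VT ->
            @a_out A (st R v) = Some (heavy VT p s hc v, compressed VT p s hc ID v)
            /\ forall r, r <= R ->
                 @a_out A (st r v) = None \/
                 @a_out A (st r v) = Some (heavy VT p s hc v, compressed VT p s hc ID v)].
Proof.
exists (Algo cid), (2 * cid + 4), 4, 1.
move=> n adj ID VT p s Hsym Hirr Hinj Hbd Ht loc st.
exists (hgt VT p s s + diam VT p * lg n), (hcg VT p s).
have hd := hgt_diam Ht.
have L1 := lgn_pos n.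
split.
- rewrite expn1; nia.
- exact: (@hcg_choice n VT p s).
- move=> r u v m _ _; rewrite /st /= (st_spec Hinj Hbd Ht Hsym).
  exact: spec_size.
- move=> u v _; rewrite expn1.
  rewrite (eq_bigr (fun r : 'I_ _ => isSome (spec cid ID VT p s r u v) + isSome (spec cid ID VT p s r v u))); last first.
    by move=> r _; rewrite /st /= !(st_spec Hinj Hbd Ht Hsym).
  rewrite big_split /=.
  have H1 := spec_count cid ID Ht (hgt VT p s s + diam VT p * lg n) u v.
  have H2 := spec_count cid ID Ht (hgt VT p s s + diam VT p * lg n) v u.
  apply: leq_trans (leq_add H1 H2) _; lia.
- move=> v vVT.
  have tb : tg ID VT p s v <= hgt VT p s s + diam VT p * lg n.
    apply: leq_trans (tg_bound ID Ht vVT) _.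
    by rewrite leq_add2l leq_mul2r (depth_diam Ht vVT) orbT.
  have HO r : @a_out (Algo cid) (st r v) = if (v == s) || (tg ID VT p s v <= r)
      then Some (heavy VT p s (hcg VT p s) v, compressed VT p s (hcg VT p s) ID v) else None.
    exact: (st_out Hinj Hbd Ht Hsym r vVT).
  rewrite HO tb orbT; split => // r hr.
  by rewrite HO; case: ifP => _; [right|left].
Qed.
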